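(* Let $A$ be a finite alphabet, $\mathbf{w}$ an infinite word over $A$ (not necessarily LSP) and $f$ a bLSP morphism on $A$, with $\alpha={\rm first}(f)$. Suppose a finite word $u$ is an $(a,b,c,\beta,\gamma)$-fragility of $f(\mathbf{w})$. (i) If $u=\varepsilon$, then $a={\rm first}(f)$ and $\beta b,\gamma c\in{\rm Fact}(f({\rm alph}(\mathbf{w})))$. (ii) If $u\neq\varepsilon$, then there exist letters $a',b',c'\in{\rm alph}(\mathbf{w})$ and an $(a',b',c',\beta,\gamma)$-fragility $v$ of $\mathbf{w}$ such that $|v|<|u|$, $f(v)$ is a proper prefix of $u$, and the words $ua$, $\beta ub$, $\gamma uc$ are respectively prefixes of $f(va')\alpha$, $\beta f(vb')\alpha$, $\gamma f(vc')\alpha$.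
   Context: A bLSP morphism on $A$ is an endomorphism $f$ of $A^*$ such that there is a letter $\alpha$ with $f(\alpha)=\alpha$ and, for every letter $\beta\neq\alpha$, there is a letter $\gamma$ with $f(\beta)=f(\gamma)\beta$; this $\alpha$ is unique and denoted ${\rm first}(f)$. For pairwise distinct letters $a,b,c$ and distinct letters $\beta\neq\gamma$, a finite word $u$ is an $(a,b,c,\beta,\gamma)$-fragility of an infinite word $\mathbf{x}$ if $ua$ is a prefix of $\mathbf{x}$ and $\beta ub$, $\gamma uc$ are factors of $\mathbf{x}$. ${\rm alph}(\mathbf{w})$ is the set of letters occurring in $\mathbf{w}$; for a set $X$ of words, ${\rm Fact}(X)$ is the set of factors of words of $X$; $\varepsilon$ is the empty word. *)

(* Defs.v *)
From mathcomp Require Import all_boot.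
Set Implicit Arguments. Unset Strict Implicit. Unset Printing Implicit Defensive.

Section Words.
Variable A : finType.

Definition fmorph (f : A -> seq A) (s : seq A) : seq A := flatten (map f s).

Definition pref (x : nat -> A) (n : nat) : seq A := mkseq x n.

(* Image of an infinite word under a (non-erasing) morphism:
   the i-th letter of f(w) is the i-th letter of f(w_0 ... w_i)
   (which has length > i when f is non-erasing, as bLSP morphisms are). *)
Definition fmorph_inf (f : A -> seq A) (w : nat -> A) : nat -> A :=
  fun i => nth (w 0) (fmorph f (pref w i.+1)) i.

Definition iprefix (p : seq A) (x : nat -> A) : Prop := p = pref x (size p).
Definition ifactor (p : seq A) (x : nat -> A) : Prop :=
  exists k, p = mkseq (fun i => x (k + i)) (size p).

Definition alph (w : nat -> A) (d : A) : Prop := exists i, w i = d.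

Definition bLSP_first (f : A -> seq A) (alpha : A) : Prop :=
  f alpha = [:: alpha] /\
  forall beta, beta <> alpha -> exists gamma, f beta = f gamma ++ [:: beta].

Definition fragility (x : nat -> A) (a b c beta gamma : A) (u : seq A) : Prop :=
  [/\ a <> b, a <> c, b <> c & beta <> gamma] /\
  [/\ iprefix (u ++ [:: a]) x,
       ifactor (beta :: u ++ [:: b]) x &
       ifactor (gamma :: u ++ [:: c]) x].

Definition in_Fact_img (f : A -> seq A) (w : nat -> A) (p : seq A) : Prop :=
  exists d, alph w d /\ infix p (f d).

End Words.

(* Main.v *)
Require Import Defs.
From mathcomp Require Import all_boot.
Set Implicit Arguments. Unset Strict Implicit. Unset Printing Implicit Defensive.

Lemma catl_cancel (T : Type) (p x y : seq T) : p ++ x = p ++ y -> x = y.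
Proof. by elim: p => //= z p IH [] /IH. Qed.

Lemma cat_split (T : Type) (L1 L2 M1 M2 : seq T) :
  L1 ++ L2 = M1 ++ M2 -> size L1 <= size M1 ->
  exists z, M1 = L1 ++ z /\ L2 = z ++ M2.
Proof.
elim: L1 M1 => [|x L1 IH] M1 /=; first by exists M1.
case: M1 => [|y M1] //= [-> E]; rewrite ltnS => /(IH _ E) [z [-> ->]].
by exists z.
Qed.

Lemma notin_pref (T : eqType) (al : T) (p X q Y : seq T) :
  al \notin p -> p ++ X = q ++ al :: Y -> exists z, q = p ++ z.
Proof.
elim: p q => [|x p IH] q; first by exists q.
rewrite inE negb_or => /andP [nx np].
case: q => [|y q] /= [E1 E2]; first by rewrite E1 eqxx in nx.
have [z ->] := IH q np E2; exists z; by rewrite E1.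
Qed.

Lemma alpha_sep (T : eqType) (al : T) (s1 X1 s2 X2 : seq T) :
  s1 ++ al :: X1 = s2 ++ al :: X2 -> al \notin s1 -> al \notin s2 ->
  s1 = s2 /\ X1 = X2.
Proof.
move=> E n1 n2; have [z Ez] := notin_pref n1 E.
move: E; rewrite Ez -catA => /catl_cancel.
case: z Ez => [|y z] Ez; first by rewrite cats0 => -[->].
move=> [Ey _]; move: n2; by rewrite Ez mem_cat inE Ey eqxx orbT.
Qed.
Lemma blsp_shape (A : finType) (f : A -> seq A) (alpha : A) :
  bLSP_first f alpha -> forall d, exists s, f d = alpha :: s /\ alpha \notin s /\ last alpha (f d) = d.
Proof.
move=> [Ha Hb] d.
have [n Hn] : exists n, size (f d) <= n by exists (size (f d)).
elim: n d Hn => [|n IH] d Hn.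
  case: (eqVneq d alpha) => [->|ne]; first by exists [::]; rewrite Ha.
  have [g Hg] := Hb d (elimN eqP ne).
  by move: Hn; rewrite Hg size_cat addn1.
case: (eqVneq d alpha) => [->|ne]; first by exists [::]; rewrite Ha.
have [g Hg] := Hb d (elimN eqP ne).
have Hs : size (f g) <= n by move: Hn; rewrite Hg size_cat addn1 ltnS.
have [s [Hs1 [Hs2 _]]] := IH g Hs.
exists (s ++ [:: d]); rewrite Hg Hs1 /= mem_cat negb_or Hs2 /= inE eq_sym ne.
by split => //; rewrite last_cat.
Qed.

Lemma fm_cons (A : finType) (f : A -> seq A) d W : fmorph f (d :: W) = f d ++ fmorph f W.
Proof. by []. Qed.

Lemma fm_cat (A : finType) (f : A -> seq A) V W : fmorph f (V ++ W) = fmorph f V ++ fmorph f W.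
Proof. by rewrite /fmorph map_cat flatten_cat. Qed.

Lemma fm_head (A : finType) (f : A -> seq A) alpha : bLSP_first f alpha ->
  forall W, fmorph f W = [::] \/ exists r, fmorph f W = alpha :: r.
Proof.
move=> Hf [|d W]; [by left|right].
have [s [E _]] := blsp_shape Hf d.
by rewrite fm_cons E; eexists.
Qed.

Lemma fm_size (A : finType) (f : A -> seq A) alpha : bLSP_first f alpha ->
  forall W, size W <= size (fmorph f W).
Proof.
move=> Hf; elim => [|d W IH] //; rewrite fm_cons size_cat.
have [s [E _]] := blsp_shape Hf d; rewrite E /=.
by rewrite addSn ltnS (leq_trans IH) // leq_addl.
Qed.

Lemma f_inj (A : finType) (f : A -> seq A) alpha : bLSP_first f alpha ->
  forall d e, f d = f e -> d = e.
Proof.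
move=> Hf d e E; have [s1 [_ [_ L1]]] := blsp_shape Hf d; have [s2 [_ [_ L2]]] := blsp_shape Hf e.
by rewrite -L1 -L2 E.
Qed.

Lemma fm_cancel (A : finType) (f : A -> seq A) alpha : bLSP_first f alpha ->
  forall V W Y, fmorph f W = fmorph f V ++ alpha :: Y ->
  exists W'', W = V ++ W'' /\ fmorph f W'' = alpha :: Y.
Proof.
move=> Hf; elim => [|v0 V IH] W Y E; first by exists W.
case: W E => [|d W] E.
  by move: E; rewrite fm_cons /=; have [s [-> _]] := blsp_shape Hf v0.
move: E; rewrite !fm_cons -catA.
have [sd [Ed [nd _]]] := blsp_shape Hf d; have [s0 [E0 [n0 _]]] := blsp_shape Hf v0.
rewrite Ed E0 /= => -[].
have [G' EG] : exists G', fmorph f V ++ alpha :: Y = alpha :: G'.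
  case: (fm_head Hf V) => [->|[r ->]]; by eexists.
rewrite EG.
case: (fm_head Hf W) => [->|[r Er]].
  rewrite cats0 => Esd; move: nd; by rewrite Esd mem_cat inE eqxx orbT.
rewrite Er => /alpha_sep /(_ nd n0) [Es Er'].
have edv : d = v0 by apply: (f_inj Hf); rewrite Ed E0 Es.
have [W'' [-> H2]] : exists W'', W = V ++ W'' /\ fmorph f W'' = alpha :: Y.
  by apply: IH; rewrite Er Er' EG.
by exists W''; rewrite edv.
Qed.

Lemma fm_decode (A : finType) (f : A -> seq A) alpha : bLSP_first f alpha ->
  forall W s e R, fmorph f W = alpha :: s ++ e :: R -> alpha \notin s ->
  exists d W', W = d :: W' /\ prefix (alpha :: s ++ [:: e]) (f d ++ [:: alpha]).
Proof.
move=> Hf [|d W] s e R //= E ns; exists d, W; split => //.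
move: E; rewrite fm_cons; have [sd [Ed [nd _]]] := blsp_shape Hf d.
rewrite Ed /= eqxx /= => -[].
case: (fm_head Hf W) => [->|[r ->]].
  rewrite cats0 => ->; apply/prefixP; exists (R ++ [:: alpha]).
  by rewrite -!catA.
case: (eqVneq e alpha) => [->|ne] E.
  have [-> _] := alpha_sep E nd ns. exact: prefix_refl.
have ns' : alpha \notin s ++ [:: e] by rewrite mem_cat inE negb_or ns eq_sym ne.
have E' : (s ++ [:: e]) ++ R = sd ++ alpha :: r by rewrite -catA E.
have [z ->] := notin_pref ns' E'.
by apply/prefixP; exists (z ++ [:: alpha]); rewrite -!catA.
Qed.

Lemma fm_split (A : finType) (f : A -> seq A) alpha : bLSP_first f alpha ->
  forall W P Q, fmorph f W = P ++ alpha :: Q ->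
  exists j, P = fmorph f (take j W) /\ alpha :: Q = fmorph f (drop j W).
Proof.
move=> Hf; elim => [|d W IH] P Q.
  by case: P.
rewrite fm_cons; have [sd [Ed [nd _]]] := blsp_shape Hf d.
case: P => [|x P] E; first by exists 0; rewrite take0 drop0 fm_cons E.
move: E; rewrite Ed /= => -[Ex E].
have [z Ez] := notin_pref nd E.
move: E; rewrite Ez -catA => /catl_cancel E.
have [j [Hj1 Hj2]] := IH z Q E.
by exists j.+1; rewrite /= fm_cons Ed -Hj2 -Hj1 Ex.
Qed.

Lemma fm_straddle (A : finType) (f : A -> seq A) alpha : bLSP_first f alpha ->
  forall W P x y R, fmorph f W = P ++ x :: y :: R -> y != alpha ->
  exists d, d \in W /\ infix [:: x; y] (f d).
Proof.
move=> Hf; elim => [|d W IH] P x y R.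
  by case: P.
rewrite fm_cons => E ny.
case: (leqP (size (f d)) (size P)) => Hs.
  have [z [Ez E2]] := cat_split E Hs.
  have [d' [Hd' Hi]] := IH z x y R E2 ny.
  by exists d'; rewrite inE Hd' orbT.
have E' : (P ++ [:: x]) ++ y :: R = f d ++ fmorph f W by rewrite -catA E.
have Hs' : size (P ++ [:: x]) <= size (f d) by rewrite size_cat addn1.
have [z [Ez E2]] := cat_split E' Hs'.
exists d; rewrite inE eqxx; split => //.
case: z Ez E2 => [|y' z] Ez E2.
  case: (fm_head Hf W) E2 => [->|[r ->]] //= [Ey _].
  by rewrite Ey eqxx in ny.
move: E2 => [Ey _]; rewrite Ez -Ey -catA /=.
by apply/infixP; exists P, z.
Qed.

Lemma pref_cat (A : finType) (w : nat -> A) m N : m <= N ->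
  exists r, pref w N = pref w m ++ r.
Proof.
move=> H; exists (map w (iota m (N - m))); rewrite /pref /mkseq.
by rewrite -{1}(subnKC H) iotaD map_cat add0n.
Qed.

Lemma X_nth (A : finType) (f : A -> seq A) alpha (w : nat -> A) : bLSP_first f alpha ->
  forall i N, i < N -> fmorph_inf f w i = nth (w 0) (fmorph f (pref w N)) i.
Proof.
move=> Hf i N H; rewrite /fmorph_inf.
have [r ->] := pref_cat w H.
rewrite fm_cat nth_cat.
have -> : i < size (fmorph f (pref w i.+1)) = true.
  by apply: leq_trans (fm_size Hf _); rewrite size_mkseq.
by [].
Qed.

Lemma window (A : finType) (f : A -> seq A) alpha (w : nat -> A) : bLSP_first f alpha ->
  forall k L, exists Q R, fmorph f (pref w (k + L)) = Q ++ mkseq (fun i => fmorph_inf f w (k + i)) L ++ R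
    /\ size Q = k.
Proof.
move=> Hf k L; set FN := fmorph f (pref w (k + L)).
have HS : k + L <= size FN by apply: leq_trans (fm_size Hf _); rewrite size_mkseq.
exists (take k FN), (drop L (drop k FN)); split; last first.
  by rewrite size_takel // (leq_trans (leq_addr L k) HS).
suff -> : mkseq (fun i => fmorph_inf f w (k + i)) L = take L (drop k FN).
  by rewrite !cat_take_drop.
apply: (@eq_from_nth _ (w 0)).
  rewrite size_mkseq size_takel // size_drop.
  by rewrite leq_subRL // (leq_trans (leq_addr L k) HS).
move=> i; rewrite size_mkseq => Hi.
rewrite nth_mkseq // nth_take // nth_drop.
apply: X_nth Hf _ _ _; by rewrite ltn_add2l.
Qed.

Lemma wfactor (A : finType) (w : nat -> A) N Q p R :
  pref w N = Q ++ p ++ R -> mkseq (fun i => w (size Q + i)) (size p) = p.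
Proof.
move=> E; apply: (@eq_from_nth _ (w 0)); first by rewrite size_mkseq.
move=> i; rewrite size_mkseq => Hi; rewrite nth_mkseq //.
have HN : size Q + i < N.
  by rewrite -(size_mkseq w N) -/(pref w N) E !size_cat ltn_add2l (leq_trans Hi) // leq_addr.
by rewrite -(nth_mkseq (w 0) w HN) -/(pref w N) E nth_cat ltnNge leq_addr /= addKn nth_cat Hi.
Qed.

Lemma prefix_img (A : finType) (f : A -> seq A) alpha (w : nat -> A) p : bLSP_first f alpha ->
  iprefix p (fmorph_inf f w) -> exists N R, fmorph f (pref w N) = p ++ R.
Proof.
move=> Hf Hp; have [Q [R [E HQ]]] := window w Hf 0 (size p).
exists (0 + size p), R; rewrite E; case: Q HQ E => // _ _ /=.
by rewrite {2}Hp.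
Qed.

Lemma factor_img (A : finType) (f : A -> seq A) alpha (w : nat -> A) p : bLSP_first f alpha ->
  ifactor p (fmorph_inf f w) -> exists N Q R, fmorph f (pref w N) = Q ++ p ++ R.
Proof.
move=> Hf [k Hp]; have [Q [R [E HQ]]] := window w Hf k (size p).
by exists (k + size p), Q, R; rewrite E -Hp.
Qed.

Lemma wprefix (A : finType) (w : nat -> A) N p R :
  pref w N = p ++ R -> iprefix p w.
Proof.
move=> E; have H := @wfactor A w N [::] p R E; rewrite /iprefix /pref -{1}H.
by apply: eq_mkseq.
Qed.

Lemma wifactor (A : finType) (w : nat -> A) N Q p R :
  pref w N = Q ++ p ++ R -> ifactor p w.
Proof. move=> E; exists (size Q); by rewrite (wfactor E). Qed.

Lemma in_pref_alph (A : finType) (w : nat -> A) N d : d \in pref w N -> alph w d.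
Proof. by move=> /mapP [i _ ->]; exists i. Qed.

Lemma last_alpha (T : eqType) (al : T) (u : seq T) : al \in u ->
  exists P s, u = P ++ al :: s /\ al \notin s.
Proof.
elim: u => [|x u IH] //; rewrite inE.
case: (boolP (al \in u)) => [/IH [P [s [-> ns]]] _|nu]; first by exists (x :: P), s; split.
rewrite orbF => /eqP Ex; exists [::], u; rewrite -Ex; by split.
Qed.

Lemma prefix_last (T : eqType) (p t : seq T) x y :
  prefix (p ++ [:: x]) t -> prefix (p ++ [:: y]) t -> x = y.
Proof.
move=> /prefixP [r1 ->] /prefixP [r2]; rewrite -!catA => /catl_cancel /=.
by case.
Qed.

Lemma side (A : finType) (f : A -> seq A) alpha (w : nat -> A) beta b u v s :
  bLSP_first f alpha ->
  ifactor (beta :: u ++ [:: b]) (fmorph_inf f w) ->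
  u = fmorph f v ++ alpha :: s -> alpha \notin s ->
  exists b', alph w b' /\ ifactor (beta :: v ++ [:: b']) w /\
    prefix (alpha :: s ++ [:: b]) (f b' ++ [:: alpha]).
Proof.
move=> Hf Hfac Eu ns.
have [N [Q [R E]]] := factor_img Hf Hfac.
have [u' Eu'] : exists u', fmorph f v ++ alpha :: s = alpha :: u'.
  case: (fm_head Hf v) => [->|[r ->]]; by eexists.
have E2 : fmorph f (pref w N) = (Q ++ [:: beta]) ++ alpha :: (u' ++ b :: R).
  by rewrite E Eu Eu' -catA /= -catA.
have [j [Hj1 Hj2]] := fm_split Hf E2.
have E3 : fmorph f (drop j (pref w N)) = fmorph f v ++ alpha :: (s ++ b :: R).
  by rewrite -Hj2 -cat_cons -Eu' -!catA.
have [W'' [Ed E4]] := fm_cancel Hf E3.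
have [b' [W3 [EW Hpre]]] := fm_decode Hf E4 ns.
exists b'; split.
  apply: (@in_pref_alph _ w N); rewrite -(cat_take_drop j (pref w N)) Ed EW.
  by rewrite !mem_cat inE eqxx !orbT.
split => //.
have [Et|[T [t Et]]] : take j (pref w N) = [::] \/ exists T t, take j (pref w N) = rcons T t.
  by case/lastP: (take j (pref w N)) => [|T t]; [left|right; exists T, t].
  by move: Hj1; rewrite Et; case: (Q).
have Hbt : beta = t.
  have [st [Est [_ Lt]]] := blsp_shape Hf t.
  move: Hj1; rewrite Et -cats1 fm_cat => /(congr1 (last alpha)).
  rewrite !last_cat /=; move: Lt; rewrite Est /= => <-; by [].
apply: (@wifactor _ w N T _ W3).
rewrite -(cat_take_drop j (pref w N)) Et Ed EW -Hbt -cats1 -!catA /=.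
by rewrite -!catA.
Qed.

Theorem lemma4 (A : finType) (w : nat -> A) (f : A -> seq A) (alpha : A)
  (a b c beta gamma : A) (u : seq A) :
  bLSP_first f alpha ->
  fragility (fmorph_inf f w) a b c beta gamma u ->
  (u = [::] ->
     a = alpha /\ in_Fact_img f w [:: beta; b] /\ in_Fact_img f w [:: gamma; c]) /\
  (u <> [::] ->
     exists a' b' c' v,
       [/\ alph w a', alph w b' & alph w c'] /\
       fragility w a' b' c' beta gamma v /\
       size v < size u /\
       (prefix (fmorph f v) u /\ size (fmorph f v) < size u) /\
       [/\ prefix (u ++ [:: a]) (fmorph f (rcons v a') ++ [:: alpha]),
           prefix (beta :: u ++ [:: b]) (beta :: fmorph f (rcons v b') ++ [:: alpha]) &
           prefix (gamma :: u ++ [:: c]) (gamma :: fmorph f (rcons v c') ++ [:: alpha])]).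
Proof.
move=> Hf [[nab nac nbc nbg] [Hpa Hb Hc]].
have [N1 [R1 E1]] := prefix_img Hf Hpa.
have Hhead : exists r, u ++ a :: R1 = alpha :: r.
  case: (fm_head Hf (pref w N1)) => [|[r]]; rewrite E1 -catA; first by case: (u).
  by move=> Er; exists r.
split.
  move=> Eu; subst u.
  have Ea : a = alpha by case: Hhead => r [].
  subst a; split => //.
  have Hfact : forall x y, y <> alpha -> ifactor [:: x; y] (fmorph_inf f w) ->
      in_Fact_img f w [:: x; y].
    move=> x y ny Hxy; have [N [Q [R E]]] := factor_img Hf Hxy.
    have [d [Hd Hi]] := fm_straddle Hf E (introN eqP ny).
    by exists d; split => //; apply: in_pref_alph Hd.
  by split; apply: Hfact => //; [move=> Eb; apply: nab | move=> Ec; apply: nac].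
move=> nu.
have [P [s [Eu ns]]] : exists P s, u = P ++ alpha :: s /\ alpha \notin s.
  apply: last_alpha; case: Hhead => r; case: (u) nu => // x u' _ [-> _].
  by rewrite inE eqxx.
have E1' : fmorph f (pref w N1) = P ++ alpha :: (s ++ a :: R1).
  by rewrite E1 Eu -!catA.
have [j [Hj1 Hj2]] := fm_split Hf E1'.
have [a' [W1 [EW1 Hpa']]] := fm_decode Hf (esym Hj2) ns.
set v := take j (pref w N1).
have EuV : u = fmorph f v ++ alpha :: s by rewrite Eu Hj1.
have [b' [Hb'1 [Hb'2 Hb'3]]] := side Hf Hb EuV ns.
have [c' [Hc'1 [Hc'2 Hc'3]]] := side Hf Hc EuV ns.
have Ew : pref w N1 = (v ++ [:: a']) ++ W1 by rewrite -catA /= -EW1 cat_take_drop.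
exists a', b', c', v; split.
  split => //; apply: (@in_pref_alph _ w N1); rewrite Ew !mem_cat inE eqxx; by rewrite orbT.
split.
  split; first split => //.
  - move=> E; apply: nab; apply: (prefix_last (p := alpha :: s) (t := f a' ++ [:: alpha])) => //.
    by rewrite E.
  - move=> E; apply: nac; apply: (prefix_last (p := alpha :: s) (t := f a' ++ [:: alpha])) => //.
    by rewrite E.
  - move=> E; apply: nbc; apply: (prefix_last (p := alpha :: s) (t := f b' ++ [:: alpha])) => //.
    by rewrite E.
  split => //; exact: wprefix Ew.
have Hsz : size (fmorph f v) < size u by rewrite EuV size_cat /= addnS ltnS leq_addr.
split; first exact: leq_ltn_trans (fm_size Hf v) Hsz.
split; first (split; [by rewrite EuV prefix_prefix | exact: Hsz]).
have Hpf : forall x e, prefix (alpha :: s ++ [:: x]) (f e ++ [:: alpha]) ->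
    prefix (u ++ [:: x]) (fmorph f (rcons v e) ++ [:: alpha]).
  move=> x e H; rewrite EuV -cats1 fm_cat /= ?cats0 -!catA prefix_catr //.
  by rewrite eqxx /=.
split; [exact: Hpf | |]; by rewrite /= eqxx /= Hpf.
Qed.
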